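(* In the noiseless discrete channel setting described in the context, suppose Assumption A holds, and suppose that for some sequence of sample sizes $n=n_N$ it holds that $\lim_{N\to\infty}\mathrm P(Z_{N,\delta}>0)=0$ for all $\delta\in(0,2]$. Then $$\lim_{N\to\infty}\frac{H(\theta\mid Y^n,X^n)}{H(\theta)}=0.$$
   Context: Setting. For each $N\in\mathbb N$: $\Theta=\Theta_N$ is a finite subset of the unit sphere of $\mathbb R^N$ of cardinality $M=M_N$, with $M_N\to\infty$ and $\langle\theta,\theta'\rangle\ge 0$ for all $\theta,\theta'\in\Theta$; $P_\Theta$ is the uniform distribution on $\Theta$; $\mathcal D=\mathcal D_N$ is a distribution on $\mathbb R^{L}$; $g=g_N:\mathbb R^L\times\mathbb R^N\to\mathcal Y$ with $\mathcal Y$ finite of cardinality independent of $N$. One draws $\theta\sim P_\Theta$, independently $X_1,\dots,X_n$ i.i.d. from $\mathcal D$, and sets $Y_i=g(X_i,\theta)$; $Y^n=(Y_i)_{i\le n}$, $X^n=(X_i)_{i\le n}$. $H$ denotes Shannon entropy (natural log), so $H(\theta)=\log M$. For $\delta\in[0,2]$, $Z_{N,\delta}$ is the number of $\theta'\in\Theta$ with $Y_i=g(X_i,\theta')$ for all $i\le n$ and $\|\theta-\theta'\|^2\ge\delta$. Assumption A: for $\theta,\theta'$ independent draws from $P_\Theta$, $\lim_{\delta\to0^+}\lim_{N\to\infty}\frac{\log\left(M\,P_\Theta^{\otimes2}(\langle\theta,\theta'\rangle\ge 1-\delta)\right)}{\log M}=0$; and for any $\theta\in\Theta$, if $\theta'\sim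 P_\Theta$, then for every $\epsilon>0$, $\lim_N P_\Theta(\langle\theta',\theta\rangle\ge\epsilon)=0$. *)

(* Defs.v *)
From HB Require Import structures.
From mathcomp Require Import all_boot all_order all_algebra.
From mathcomp Require Import all_classical all_reals all_analysis.
Set Implicit Arguments. Unset Strict Implicit. Unset Printing Implicit Defensive.
Import Order.TTheory GRing.Theory Num.Theory.
Import numFieldNormedType.Exports.
Local Open Scope classical_set_scope.
Local Open Scope ring_scope.

Definition dotv {R : realType} {N : nat} (u v : 'rV[R]_N) : R :=
  \sum_(i < N) u ord0 i * v ord0 i.

Definition sqdist {R : realType} {N : nat} (u v : 'rV[R]_N) : R :=
  dotv (u - v) (u - v).

(* The observations Y^n = (g(X_i, theta))_{i<n} produced by parameter index t,
   for a sample x = X^n in (R^L)^n (R^L represented as L.-tuple R). *)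
Definition obs {R : realType} {Y : Type} {L N n M : nat}
  (Th : 'I_M -> 'rV[R]_N) (g : L.-tuple R -> 'rV[R]_N -> Y)
  (x : n.-tuple (L.-tuple R)) (t : 'I_M) : n.-tuple Y :=
  [tuple g (tnth x i) (Th t) | i < n].

(* Posterior probability P(theta = Th t | Y^n = y, X^n = x) under the uniform
   prior P_Theta on Theta = {Th t}, by Bayes' formula (noiseless channel:
   the likelihood of y given (x, theta') is the indicator [obs x theta' == y]). *)
Definition posterior {R : realType} {Y : eqType} {L N n M : nat}
  (Th : 'I_M -> 'rV[R]_N) (g : L.-tuple R -> 'rV[R]_N -> Y)
  (x : n.-tuple (L.-tuple R)) (y : n.-tuple Y) (t : 'I_M) : R :=
  ((M%:R)^-1 * (obs Th g x t == y)%:R) /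
  (\sum_(t' < M) (M%:R)^-1 * (obs Th g x t' == y)%:R).

(* Conditional entropy H(theta | Y^n, X^n) (natural log), where theta ~ P_Theta
   is independent of X^n ~ Q and Y^n = obs X^n theta:
   H = E[ - ln P(theta | Y^n, X^n) ]. *)
Definition cond_entropy {R : realType} {Y : eqType} {L N n M : nat}
  (Th : 'I_M -> 'rV[R]_N) (g : L.-tuple R -> 'rV[R]_N -> Y)
  (Q : probability (n.-tuple (L.-tuple R)) R) : \bar R :=
  (\sum_(t < M) ((M%:R)^-1)%:E *
     \int[Q]_x (- ln (posterior Th g x (obs Th g x t) t))%:E)%E.

(* Z_{N,delta}(theta = Th t, X^n = x): number of theta' in Theta consistent with
   all the observations and with ||theta - theta'||^2 >= delta. *)
Definition Zcount {R : realType} {Y : eqType} {L N n M : nat}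
  (Th : 'I_M -> 'rV[R]_N) (g : L.-tuple R -> 'rV[R]_N -> Y)
  (delta : R) (x : n.-tuple (L.-tuple R)) (t : 'I_M) : nat :=
  #|[set t' : 'I_M | (obs Th g x t' == obs Th g x t)
                     && (delta <= sqdist (Th t) (Th t'))]|.

(* P(Z_{N,delta} > 0) under the joint law of (theta, X^n) = P_Theta (x) Q. *)
Definition probZpos {R : realType} {Y : eqType} {L N n M : nat}
  (Th : 'I_M -> 'rV[R]_N) (g : L.-tuple R -> 'rV[R]_N -> Y)
  (Q : probability (n.-tuple (L.-tuple R)) R) (delta : R) : \bar R :=
  (\sum_(t < M) ((M%:R)^-1)%:E *
     Q [set x | (0 < Zcount Th g delta x t)%N])%E.

(* Q is the law of X^n = (X_1,...,X_n) with X_i i.i.d. ~ D, i.e. Q = D^{(x) n}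
   (characterized on measurable rectangles). *)
Definition iid_law {R : realType} {L n : nat}
  (D : probability (L.-tuple R) R)
  (Q : probability (n.-tuple (L.-tuple R)) R) : Prop :=
  forall A : 'I_n -> set (L.-tuple R), (forall i, measurable (A i)) ->
    Q [set x | forall i, A i (tnth x i)] = (\prod_(i < n) D (A i))%E.

(* P_Theta^{(x)2}(<theta, theta'> >= 1 - delta) *)
Definition close_pair_prob {R : realType} {N M : nat}
  (Th : 'I_M -> 'rV[R]_N) (delta : R) : R :=
  (#|[set tt : 'I_M * 'I_M | 1 - delta <= dotv (Th tt.1) (Th tt.2)]|%:R)
  / (M%:R ^+ 2).

Definition assumptionA {R : realType} (M : nat -> nat)
  (Th : forall N, 'I_(M N) -> 'rV[R]_N) : Prop :=
  (exists2 delta0 : R, 0 < delta0 &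
     exists ell : R -> R,
       (forall delta, 0 < delta < delta0 ->
          (ln ((M N)%:R * close_pair_prob (Th N) delta) / ln (M N)%:R)
            @[N --> \oo] --> ell delta)
       /\ ell delta @[delta --> (0:R)^'+] --> (0 : R))
  /\
  (forall (s : forall N, 'I_(M N)) (eps : R), 0 < eps ->
     ((#|[set t' : 'I_(M N) | eps <= dotv (Th N t') (Th N (s N))]|%:R)
        / (M N)%:R) @[N --> \oo] --> (0 : R)).

(* Main.v *)
Require Import Defs.
From HB Require Import structures.
From mathcomp Require Import all_boot all_order all_algebra.
From mathcomp Require Import all_classical all_reals all_analysis.
From mathcomp Require Import measurable_realfun.
From mathcomp Require Import ring lra.
Import Order.TTheory GRing.Theory Num.Theory.
Import numFieldNormedType.Exports.
Local Open Scope classical_set_scope.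
Local Open Scope ring_scope.
Set Implicit Arguments. Unset Strict Implicit. Unset Printing Implicit Defensive.

Section meas.
Context d (X : measurableType d) (I : finType).

Lemma meas_forall (P : I -> set X) : (forall i, measurable (P i)) ->
  measurable [set x | forall i, P i x].
Proof.
move=> mP; have -> : [set x | forall i, P i x] = \bigcap_(i in [set: I]) P i.
  by apply/seteqP; split => x /= H i; [move=> _|]; apply: H.
by apply: fin_bigcap_measurable => //; exact: finite_finset.
Qed.

Lemma meas_exists (P : I -> set X) : (forall i, measurable (P i)) ->
  measurable [set x | exists i, P i x].
Proof.
move=> mP; have -> : [set x | exists i, P i x] = \bigcup_(i in [set: I]) P i.
  by apply/seteqP; split => x /= [i H]; exists i.
by apply: fin_bigcup_measurable => //; exact: finite_finset.
Qed.
End meas.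

Section perN.
Context (R : realType) (Y : finType) (L n M N : nat) (Th : 'I_M -> 'rV[R]_N)
  (g : L.-tuple R -> 'rV[R]_N -> Y) (Q : probability (n.-tuple (L.-tuple R)) R).
Hypothesis hmeas : forall t y, measurable [set x : L.-tuple R | g x (Th t) = y].

Definition Eset (t t' : 'I_M) := [set x : n.-tuple (L.-tuple R) | obs Th g x t' = obs Th g x t].

Lemma Eset_meas t t' : measurable (Eset t t').
Proof.
have -> : Eset t t' = [set x | forall i : 'I_n, exists y : Y,
    ((fun x : n.-tuple (L.-tuple R) => tnth x i) @^-1` ([set z | g z (Th t') = y] `&` [set z | g z (Th t) = y])) x].
  apply/seteqP; split => x /=.
    move=> H i; exists (g (tnth x i) (Th t)); split => //.
    by move: (congr1 (fun u => tnth u i) H); rewrite !tnth_mktuple.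
  move=> H; apply: eq_from_tnth => i; rewrite !tnth_mktuple.
  by have [y [-> ->]] := H i.
apply: meas_forall => i; apply: meas_exists => y.
rewrite -[X in measurable X]setTI; apply: measurable_tnth => //.
exact: measurableI.
Qed.
End perN.


Lemma memsetb (T : Type) (P : T -> bool) x : (x \in [set y | P y]) = P x.
Proof. by apply/idP/idP; rewrite in_setE. Qed.

Section perN2.
Context (R : realType) (Y : finType) (L n M N : nat) (Th : 'I_M -> 'rV[R]_N)
  (g : L.-tuple R -> 'rV[R]_N -> Y) (Q : probability (n.-tuple (L.-tuple R)) R).
Hypothesis hmeas : forall t y, measurable [set x : L.-tuple R | g x (Th t) = y].
Hypothesis hdot1 : forall t, dotv (Th t) (Th t) = 1.

Definition Kc (x : n.-tuple (L.-tuple R)) (t : 'I_M) := #|[set t' : 'I_M | obs Th g x t' == obs Th g x t]|.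
Definition Cc (d : R) (t : 'I_M) := #|[set t' : 'I_M | sqdist (Th t) (Th t') < d]|.
Definition Zset (d : R) (t : 'I_M) :=
  [set x : n.-tuple (L.-tuple R) | (0 < Zcount Th g d x t)%N].

Lemma Zset_meas d t : measurable (Zset d t).
Proof.
have -> : Zset d t = [set x | exists t' : 'I_M,
    (if d <= sqdist (Th t) (Th t') then Eset Th g t t' else set0) x].
  apply/seteqP; split => x /=.
    rewrite /Zset /Zcount /= => /card_gt0P [t']; rewrite memsetb => /andP [/eqP e le].
    by exists t'; rewrite le.
  move=> [t']; case: ifP => // le e; rewrite /Zset /Zcount /=; apply/card_gt0P.
  by exists t'; rewrite memsetb le andbT; apply/eqP.
apply: meas_exists => t'; case: ifP => _ //; exact: Eset_meas.
Qed.

Lemma Kc_ge1 x t : (1 <= Kc x t)%N.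
Proof. by apply/card_gt0P; exists t; rewrite memsetb. Qed.

Lemma Kc_sum x t : (Kc x t)%:R = \sum_(t' < M) \1_(Eset Th g t t') x :> R.
Proof.
rewrite /Kc -sum1_card natr_sum [LHS]big_mkcond /=; apply: eq_bigr => t' _.
rewrite memsetb indicE.
have -> : (x \in Eset Th g t t') = (obs Th g x t' == obs Th g x t).
  by apply/idP/eqP; rewrite in_setE.
by case: (_ == _).
Qed.

Lemma posteriorE x t : (0 < M)%N ->
  posterior Th g x (obs Th g x t) t = (Kc x t)%:R^-1.
Proof.
move=> M0; rewrite /posterior eqxx mulr1 -mulr_sumr.
have -> : \sum_(t' < M) ((obs Th g x t' == obs Th g x t))%:R = (Kc x t)%:R :> R.
  rewrite /Kc -sum1_card natr_sum [RHS]big_mkcond /=; apply: eq_bigr => t' _.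
  by rewrite memsetb; case: (_ == _).
have Mn0 : (M%:R : R)^-1 != 0 by rewrite invr_eq0 pnatr_eq0 -lt0n.
by rewrite invfM mulrA mulfV // mul1r.
Qed.

Lemma integrandE x t : (0 < M)%N ->
  - ln (posterior Th g x (obs Th g x t) t) = ln (Kc x t)%:R.
Proof.
move=> M0; rewrite posteriorE // lnV ?opprK // posrE ltr0n; exact: Kc_ge1.
Qed.

Lemma integrand_meas t :
  measurable_fun [set: n.-tuple (L.-tuple R)] (fun x => (ln (Kc x t)%:R : R)%:E).
Proof.
apply/measurable_EFinP; apply: measurableT_comp; first exact: measurable_ln.
rewrite (_ : (fun x => (Kc x t)%:R) = (fun x => \sum_(t' < M) \1_(Eset Th g t t') x)); last first.
  by apply/funext => x; rewrite Kc_sum.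
apply: measurable_sum => t'; apply: measurable_indic; exact: Eset_meas.
Qed.

End perN2.


Lemma card_csetE (T : finType) (P : pred T) : #|[set t | P t]| = #|P|.
Proof. by apply: eq_card => t; rewrite memsetb. Qed.

Section perN3.
Context (R : realType) (Y : finType) (L n M N : nat) (Th : 'I_M -> 'rV[R]_N)
  (g : L.-tuple R -> 'rV[R]_N -> Y) (Q : probability (n.-tuple (L.-tuple R)) R).
Hypothesis hmeas : forall t y, measurable [set x : L.-tuple R | g x (Th t) = y].

Lemma sqdist_self (t : 'I_M) : sqdist (Th t) (Th t) = 0.
Proof. by rewrite /sqdist subrr /dotv big1 // => i _; rewrite mxE mul0r. Qed.

Lemma Cc_ge1 (d : R) t : 0 < d -> (1 <= Cc Th d t)%N.
Proof. by move=> d0; apply/card_gt0P; exists t; rewrite memsetb sqdist_self. Qed.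

Lemma pt_bound (d : R) t (x : n.-tuple (L.-tuple R)) : 0 < d -> (0 < M)%N ->
  ln (Kc Th g x t)%:R <= ln (Cc Th d t)%:R + ln (M%:R : R) * \1_(Zset Th g d t) x :> R.
Proof.
move=> d0 M0; have K1 := Kc_ge1 Th g x t; have C1 := Cc_ge1 t d0.
have [hz|hz] := boolP (0 < Zcount Th g d x t)%N.
  have -> : \1_(Zset Th g d t) x = 1 :> R.
    by rewrite indicE; have -> : x \in Zset Th g d t by rewrite in_setE.
  rewrite mulr1 -[X in X <= _]add0r; apply: lerD.
    by apply: ln_ge0; rewrite ler1n.
  rewrite ler_ln ?posrE ?ltr0n // ler_nat.
  by apply: leq_trans (max_card _) _; rewrite card_ord.
have -> : \1_(Zset Th g d t) x = 0 :> R.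
  by rewrite indicE; have -> : x \in Zset Th g d t = false by apply/negbTE/negP; rewrite in_setE; apply/negP.
rewrite mulr0 addr0 ler_ln ?posrE ?ltr0n // ler_nat.
rewrite /Kc /Cc !card_csetE; apply/subset_leq_card/fintype.subsetP => t'.
rewrite !unfold_in /= => /eqP e.
rewrite ltNge; apply/negP => le; move: hz; apply/negP; rewrite negbK.
by apply/card_gt0P; exists t'; rewrite memsetb le andbT e.
Qed.

Local Open Scope ereal_scope.

Lemma int_bound (d : R) t : (0 < d)%R -> (0 < M)%N ->
  \int[Q]_x (- ln (posterior Th g x (obs Th g x t) t))%:E <=
  (ln (Cc Th d t)%:R + ln M%:R * fine (Q (Zset Th g d t)))%:E.
Proof.
move=> d0 M0.
have C1 := Cc_ge1 t d0.
have lnC0 : (0 <= ln (Cc Th d t)%:R :> R)%R by apply: ln_ge0; rewrite ler1n.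
have lnM0 : (0 <= ln M%:R :> R)%R by apply: ln_ge0; rewrite ler1n.
under eq_integral do rewrite integrandE //.
apply: (@le_trans _ _ (\int[Q]_x ((ln (Cc Th d t)%:R)%:E + (ln M%:R * \1_(Zset Th g d t) x)%:E))).
  apply: ge0_le_integral => //.
  - by move=> x _; rewrite lee_fin; apply: ln_ge0; rewrite ler1n; exact: Kc_ge1.
  - exact: integrand_meas.
  - apply: emeasurable_funD; first exact: measurable_cst.
    apply/measurable_EFinP; apply: measurable_funM; first exact: measurable_cst.
    by apply: measurable_indic; exact: Zset_meas.
  - by move=> x _; rewrite -EFinD lee_fin; apply: pt_bound.
rewrite ge0_integralD //; last 2 first.
- by move=> x _; rewrite lee_fin mulr_ge0.
- apply/measurable_EFinP; apply: measurable_funM; first exact: measurable_cst.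
  by apply: measurable_indic; exact: Zset_meas.
rewrite integral_cst // [X in (_ * X + _)%E]probability_setT mule1.
under eq_integral do rewrite EFinM.
rewrite ge0_integralZl_EFin //; last first.
  by apply/measurable_EFinP; apply: measurable_indic; exact: Zset_meas.
rewrite integral_indic ?setIT; last exact: Zset_meas.
rewrite EFinD EFinM fineK //.
rewrite ge0_fin_numE //; apply: (le_lt_trans (probability_le1 _ _)); [exact: Zset_meas | by rewrite ltry].
exact: measurableT.
Qed.

End perN3.


Lemma sqdistE (R : realType) (N : nat) (u v : 'rV[R]_N) :
  sqdist u v = dotv u u + dotv v v - 2 * dotv u v.
Proof.
rewrite /sqdist /dotv mulr_sumr -big_split -sumrB /=; apply: eq_bigr => i _.
rewrite !mxE; ring.
Qed.

Lemma jensen_ln (R : realType) (M : nat) (c : 'I_M -> R) : (0 < M)%N ->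
  (forall t, 1 <= c t) -> M%:R^-1 * \sum_(t < M) ln (c t) <= ln (M%:R^-1 * \sum_(t < M) c t).
Proof.
move=> M0 c1.
have Mpos : 0 < (M%:R : R) by rewrite ltr0n.
set A := M%:R^-1 * \sum_(t < M) c t.
have A1 : 1 <= A.
  rewrite /A ler_pdivlMl // mulr1.
  have -> : (M%:R : R) = \sum_(t < M) 1 by rewrite sumr_const card_ord.
  by apply: ler_sum => t _; exact: c1.
have A0 : 0 < A by apply: lt_le_trans A1.
have key t : ln (c t) <= ln A + (c t / A - 1).
  have ct0 : 0 < c t by apply: lt_le_trans (c1 t).
  have -> : ln (c t) = ln A + ln (1 + (c t / A - 1)).
    have -> : 1 + (c t / A - 1) = c t / A by rewrite addrC subrK.
    rewrite ln_div ?posrE //; ring.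
  apply: lerD => //; apply: le_ln1Dx.
  rewrite ltrBrDl addrN; exact: divr_gt0.
have S0 : \sum_(t < M) c t = M%:R * A by rewrite /A mulrA mulfV ?mul1r // lt0r_neq0.
have : \sum_(t < M) ln (c t) <= \sum_(t < M) (ln A + (c t / A - 1)).
  by apply: ler_sum => t _; exact: key.
rewrite big_split /= sumrB !sumr_const card_ord -mulr_suml S0.
have -> : M%:R * A / A = M%:R by rewrite mulfK // lt0r_neq0.
rewrite subrr addr0 => H.
rewrite -(@ler_pM2l _ M%:R) // mulrA mulfV ?mul1r ?lt0r_neq0 //.
by rewrite mulr_natl.
Qed.


Lemma sum_card_pairs (R : realType) (M : nat) (P : 'I_M -> 'I_M -> bool) :
  \sum_(t < M) (#|[set t' | P t t']|)%:R = (#|[set tt : 'I_M * 'I_M | P tt.1 tt.2]|)%:R :> R.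
Proof.
rewrite -natr_sum; congr (_%:R).
under eq_bigr do rewrite card_csetE -sum1_card.
rewrite pair_big_dep /= card_csetE -sum1_card; apply: eq_bigl => p.
by rewrite unfold_in.
Qed.

Lemma fine_le_bound (R : realType) (x : \bar R) (b : R) : (0 <= x)%E -> (x <= b%:E)%E -> fine x <= b.
Proof. by case: x => [r| |] //=; rewrite lee_fin. Qed.

Section perN4.
Context (R : realType) (Y : finType) (L n M N : nat) (Th : 'I_M -> 'rV[R]_N)
  (g : L.-tuple R -> 'rV[R]_N -> Y) (Q : probability (n.-tuple (L.-tuple R)) R).
Hypothesis hmeas : forall t y, measurable [set x : L.-tuple R | g x (Th t) = y].
Hypothesis hdot1 : forall t, dotv (Th t) (Th t) = 1.

Lemma ce_ge0 : (0 < M)%N -> (0 <= cond_entropy Th g Q)%E.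
Proof.
move=> M0; rewrite /cond_entropy; apply: sume_ge0 => t _; apply: mule_ge0.
  by rewrite lee_fin invr_ge0 ler0n.
apply: integral_ge0 => x _; rewrite integrandE // lee_fin; apply: ln_ge0.
by rewrite ler1n; exact: Kc_ge1.
Qed.

Lemma ce_le (d : R) : 0 < d -> (0 < M)%N ->
  (cond_entropy Th g Q <=
   (\sum_(t < M) M%:R^-1 * (ln (Cc Th d t)%:R + ln M%:R * fine (Q (Zset Th g d t))))%:E)%E.
Proof.
move=> d0 M0; rewrite /cond_entropy -sumEFin; apply: lee_sum => t _.
rewrite EFinM; apply: lee_wpmul2l; first by rewrite lee_fin invr_ge0 ler0n.
exact: int_bound.
Qed.

Lemma probZE (d : R) :
  probZpos Th g Q d = (\sum_(t < M) M%:R^-1 * fine (Q (Zset Th g d t)))%:E.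
Proof.
rewrite /probZpos -sumEFin; apply: eq_bigr => t _; rewrite EFinM fineK //.
rewrite ge0_fin_numE //; apply: (le_lt_trans (probability_le1 _ _)); [exact: Zset_meas | by rewrite ltry].
Qed.

Lemma sumC_le (d : R) :
  \sum_(t < M) (Cc Th (2 * d) t)%:R <=
  (#|[set tt : 'I_M * 'I_M | 1 - d <= dotv (Th tt.1) (Th tt.2)]|)%:R :> R.
Proof.
rewrite /Cc sum_card_pairs ler_nat !card_csetE.
apply/subset_leq_card/fintype.subsetP => p; rewrite !unfold_in /=.
rewrite sqdistE !hdot1 => h; lra.
Qed.

Lemma perN (d : R) : 0 < d -> (2 < M)%N ->
  fine (cond_entropy Th g Q) <=
  ln (M%:R * close_pair_prob Th d) + ln M%:R * fine (probZpos Th g Q (2 * d)).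
Proof.
move=> d0 M2; have M0 : (0 < M)%N by apply: ltn_trans M2.
have Mpos : 0 < (M%:R : R) by rewrite ltr0n.
have d20 : 0 < 2 * d by rewrite mulr_gt0.
apply: le_trans (fine_le_bound (ce_ge0 M0) (ce_le d20 M0)) _.
rewrite probZE /=.
under eq_bigr do rewrite mulrDr.
rewrite big_split /= -mulr_sumr.
have -> : \sum_(t < M) M%:R^-1 * (ln M%:R * fine (Q (Zset Th g (2 * d) t))) =
          ln M%:R * \sum_(t < M) M%:R^-1 * fine (Q (Zset Th g (2 * d) t)).
  by rewrite mulr_sumr; apply: eq_bigr => t _; rewrite mulrCA.
apply: lerD => //.
have C1 t : 1 <= ((Cc Th (2 * d) t)%:R : R) by rewrite ler1n; exact: Cc_ge1.
apply: le_trans (@jensen_ln R M (fun t => (Cc Th (2 * d) t)%:R) M0 C1) _.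
have S1 : 0 < \sum_(t < M) ((Cc Th (2 * d) t)%:R : R).
  rewrite (lt_le_trans _ (ler_sum _ (fun t _ => C1 t))) // sumr_const card_ord.
  exact: Mpos.
have main : M%:R^-1 * \sum_(t < M) ((Cc Th (2 * d) t)%:R : R) <= M%:R * close_pair_prob Th d.
  rewrite /close_pair_prob.
  set P := (#|_|)%:R.
  have -> : M%:R * (P / M%:R ^+ 2) = M%:R^-1 * P.
    by field; exact: lt0r_neq0.
  by apply: ler_wpM2l; [rewrite invr_ge0 ler0n | exact: sumC_le].
have LHS0 : 0 < M%:R^-1 * \sum_(t < M) ((Cc Th (2 * d) t)%:R : R).
  by rewrite mulr_gt0 // invr_gt0.
by rewrite ler_ln ?posrE // (lt_le_trans LHS0 main).
Qed.
End perN4.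

Theorem proposition4 (R : realType) (Y : finType) (L M n : nat -> nat)
  (Th : forall N, 'I_(M N) -> 'rV[R]_N)
  (g : forall N, (L N).-tuple R -> 'rV[R]_N -> Y)
  (D : forall N, probability ((L N).-tuple R) R)
  (Q : forall N, probability ((n N).-tuple ((L N).-tuple R)) R) :
  (forall N, injective (Th N)) ->
  (forall N t, dotv (Th N t) (Th N t) = 1) ->
  (forall N t t', 0 <= dotv (Th N t) (Th N t')) ->
  ((M N)%:R : R) @[N --> \oo] --> +oo ->
  (forall N t y, measurable [set x : (L N).-tuple R | g N x (Th N t) = y]) ->
  (forall N, iid_law (D N) (Q N)) ->
  assumptionA Th ->
  (forall delta : R, 0 < delta <= 2 ->
     fine (probZpos (Th N) (g N) (Q N) delta) @[N --> \oo] --> 0) ->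
  (fine (cond_entropy (Th N) (g N) (Q N)) / ln (M N)%:R) @[N --> \oo] --> 0.
Proof.
move=> _ dot1 _ Minf hmeas _ [[d0 d0pos [ell [hconv hell]]] _] hZ.
apply/cvgrPdist_le => e e0.
have e30 : 0 < e / 3 by rewrite divr_gt0.
have m0 : 0 < Num.min d0 1 by rewrite lt_min d0pos ltr01.
have [dl [dl0 dlt dle]] : exists dl : R,
    [/\ 0 < dl, dl < Num.min d0 1 & `|0 - ell dl| <= e / 3].
  have F : \forall x \near 0^'+, [/\ 0 < x, x < Num.min d0 1 & `|0 - ell x| <= e / 3].
    near=> x; split; near: x.
    - exact: nbhs_right_gt.
    - exact: nbhs_right_lt.
    - exact: ((cvgrPdist_le _ _).1 hell _ e30).
  have [x [x0 x1 x2]] := @filter_ex _ _ (at_right_proper_filter 0) _ F.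
  by exists x.
have dl_d0 : dl < d0 by apply: (lt_le_trans dlt); rewrite ge_min lexx.
have dl_1 : dl < 1 by apply: (lt_le_trans dlt); rewrite ge_min lexx orbT.
have ell_le : ell dl <= e / 3.
  by move: dle; rewrite sub0r normrN => /ler_normlP [].
have h1 : 0 < dl < d0 by rewrite dl0 dl_d0.
have h2 : 0 < 2 * dl <= 2.
  rewrite mulr_gt0 //= -[X in _ <= X]mulr1 ler_pM2l //; exact: ltW.
have E1 := (cvgrPdist_le _ _).1 (hconv dl h1) _ e30.
have E2 := (cvgrPdist_le _ _).1 (hZ (2 * dl) h2) _ e30.
have E3 := (cvgryPge _).1 Minf 3.
near=> N.
have r1 : `|ell dl - ln ((M N)%:R * close_pair_prob (Th N) dl) / ln (M N)%:R| <= e / 3.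
  by near: N; exact: E1.
have r2 : `|0 - fine (probZpos (Th N) (g N) (Q N) (2 * dl))| <= e / 3.
  by near: N; exact: E2.
have M3 : 3 <= ((M N)%:R : R) by near: N; exact: E3.
have M2 : (2 < M N)%N.
  by rewrite -(ltr_nat R); apply: lt_le_trans M3; lra.
have lnM0 : 0 < ln ((M N)%:R : R) by apply: ln_gt0; rewrite ltr1n; apply: ltn_trans M2.
have H0 : 0 <= fine (cond_entropy (Th N) (g N) (Q N)).
  by apply: fine_ge0; apply: ce_ge0 => //; apply: ltn_trans M2.
have Hle := perN (Q N) (hmeas N) (dot1 N) dl0 M2.
set H := fine (cond_entropy _ _ _) in H0 Hle *.
set P := fine (probZpos _ _ _ _) in r2 Hle *.
set lr := ln ((M N)%:R * _) in r1 Hle *.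
set lM := ln (M N)%:R in lnM0 r1 Hle *.
rewrite sub0r normrN ger0_norm; last by rewrite divr_ge0 // ltW.
rewrite ler_pdivrMr //.
move: r1 r2; rewrite sub0r normrN => /ler_normlP [r1a r1b] /ler_normlP [r2a r2b].
have : lr / lM <= e / 3 + e / 3 by lra.
rewrite ler_pdivrMr // => lrb.
have : P * lM <= e / 3 * lM by rewrite ler_pM2r.
nra.
Unshelve. all: by end_near.
Qed.
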